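(* Let $0\le m\le n$. Every adjacency-preserving (resp. adjacency-preserving one-to-one) map $f:[m]\to[n]$ factors uniquely as a composite $[m]\xrightarrow{\psi}[m]\xrightarrow{\phi}[n]$ with $\phi\in\square$ and $\psi$ adjacency-preserving (resp. adjacency-preserving one-to-one).
   Context: $[0]=\{()\}$, $[n]=\{0,1\}^n$ ($n\ge1$) with the product order. Face maps $\delta_i^\alpha:[n-1]\to[n]$ insert $\alpha\in\{0,1\}$ at position $i$; $\square$ is the category with objects $[n]$, $n\ge0$, generated by the face maps (under composition of set maps). With $d(\epsilon,\epsilon')=\sum_i|\epsilon_i-\epsilon'_i|$, a map $f:[m]\to[n]$ is adjacency-preserving if it is strictly increasing and $d(x,y)=1$ implies $d(f(x),f(y))=1$. *)

(* Defs.v *)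
From mathcomp Require Import all_boot.
Set Implicit Arguments. Unset Strict Implicit. Unset Printing Implicit Defensive.

(* [n] = {0,1}^n, as boolean functions on coordinates 'I_n.  [0] has one element. *)
Definition cube (n : nat) := {ffun 'I_n -> bool}.

Definition cle n (x y : cube n) : bool := [forall j, x j <= y j].
Definition clt n (x y : cube n) : bool := (x != y) && cle x y.

Definition dist n (x y : cube n) : nat := #|[set j | x j != y j]|.

Definition adj_preserving m n (f : cube m -> cube n) : Prop :=
  (forall x y, clt x y -> clt (f x) (f y)) /\
  (forall x y, dist x y = 1 -> dist (f x) (f y) = 1).

(* coordinate k of x (as a nat), default false out of range *)
Definition coord n (x : cube n) (k : nat) : bool :=
  if insub k is Some k' then x k' else false.

(* face map delta_i^a : [n] -> [n+1] inserting a at (0-based) position i <= n *)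
Definition face n (i : nat) (a : bool) (x : cube n) : cube n.+1 :=
  [ffun j : 'I_n.+1 =>
     if (j < i)%N then coord x j
     else if j == i :> nat then a else coord x j.-1].

(* morphisms of the category box: composites of face maps (incl. identities) *)
Inductive box_mor : forall m n : nat, (cube m -> cube n) -> Prop :=
  | box_id m : box_mor (@id (cube m))
  | box_face m n (g : cube m -> cube n) (i : nat) (a : bool) :
      box_mor g -> (i <= n)%N -> box_mor (face i a \o g).

Definition in_box m n (phi : cube m -> cube n) : Prop :=
  exists2 g, box_mor g & phi =1 g.

(* Main.v *)
Require Import Defs.
From mathcomp Require Import all_boot.
From mathcomp Require Import zify.
Set Implicit Arguments. Unset Strict Implicit. Unset Printing Implicit Defensive.

Definition cbot m : cube m := [ffun _ => false].
Definition ctop m : cube m := [ffun _ => true].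
Definition ones n (x : cube n) := #|[set j | x j]|.
Definition ech m (k : nat) : cube m := [ffun j : 'I_m => (j < k)%N].

Lemma clt_cle n (x y : cube n) : clt x y -> cle x y.
Proof. by case/andP. Qed.

Lemma cle_refl n (x : cube n) : cle x x.
Proof. by rewrite /cle; apply/forallP=> j; rewrite leqnn. Qed.

Lemma cle_sub n (x y : cube n) : cle x y -> [set j | x j] \subset [set j | y j].
Proof.
rewrite /cle => /forallP H; apply/subsetP=> j; rewrite !inE => xj.
by move: (H j); rewrite xj; case: (y j).
Qed.

Lemma clt_ones n (x y : cube n) : clt x y -> ones x < ones y.
Proof.
case/andP=> nxy lxy; apply: proper_card; rewrite properEneq cle_sub // andbT.
apply: contra nxy => /eqP E; apply/eqP/ffunP=> j.
move/setP: E => /(_ j); rewrite !inE.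
by case: (x j); case: (y j).
Qed.

Lemma cle_dist n (x y : cube n) : cle x y -> dist x y = ones y - ones x.
Proof.
move=> H; rewrite /dist /ones.
have -> : [set j | x j != y j] = [set j | y j] :\: [set j | x j].
  apply/setP=> j; rewrite !inE.
  move: H; rewrite /cle => /forallP /(_ j); by case: (x j); case: (y j).
by rewrite cardsD (setIidPr (cle_sub H)).
Qed.

Lemma ech_step m k : k < m -> clt (ech m k) (ech m k.+1) /\ dist (ech m k) (ech m k.+1) = 1.
Proof.
move=> km.
have le : cle (ech m k) (ech m k.+1).
  rewrite /cle; apply/forallP=> j; rewrite !ffunE; by case: (ltnP j k) => // jk; rewrite (_ : (j < k.+1) = true) // ltnS ltnW.
have D : dist (ech m k) (ech m k.+1) = 1.
  rewrite /dist -(cards1 (Ordinal km)).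
  have -> : [set j | ech m k j != ech m k.+1 j] = [set Ordinal km]; last by [].
  apply/setP=> j.
  rewrite !inE !ffunE ltnS -val_eqE /=.
  by case: ltngtP.
split=> //; rewrite /clt le andbT; apply/negP=> /eqP E.
move: D; rewrite E /dist.
have -> : [set j | ech m k.+1 j != ech m k.+1 j] = set0.
  by apply/setP=> j; rewrite !inE eqxx.
by rewrite cards0.
Qed.

Lemma ech0 m : ech m 0 = cbot m.
Proof. by apply/ffunP=> j; rewrite !ffunE. Qed.
Lemma echm m : ech m m = ctop m.
Proof. by apply/ffunP=> j; rewrite !ffunE ltn_ord. Qed.

Lemma adj_chain m n (f : cube m -> cube n) : adj_preserving f ->
  forall k, k <= m -> ones (f (ech m k)) = ones (f (ech m 0)) + k.
Proof.
case=> Hl Hd; elim=> [|k IH] km; first by rewrite addn0.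
have [c d] := ech_step km.
have c' := Hl _ _ c; have d' := Hd _ _ d.
rewrite cle_dist ?clt_cle // in d'.
have km' : k <= m by exact: ltnW.
have := clt_ones c'; rewrite (IH km').
move: d'; rewrite (IH km').
move: (ones (f (ech m k.+1))) (ones (f (ech m 0))) => a b; lia.
Qed.

Lemma adj_topbot m n (f : cube m -> cube n) : adj_preserving f ->
  ones (f (ctop m)) = ones (f (cbot m)) + m.
Proof. by move=> H; rewrite -echm -ech0 adj_chain. Qed.

Lemma adj_between m n (f : cube m -> cube n) : adj_preserving f ->
  forall x, cle (f (cbot m)) (f x) /\ cle (f x) (f (ctop m)).
Proof.
case=> Hl _ x; split.
  have [->|ne] := eqVneq (cbot m) x; first exact: cle_refl.
  apply/clt_cle/Hl; rewrite /clt ne /= /cle; apply/forallP=> j; by rewrite ffunE.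
have [->|ne] := eqVneq x (ctop m); first exact: cle_refl.
apply/clt_cle/Hl; rewrite /clt ne /= /cle; apply/forallP=> j; by rewrite ffunE; case: (x j).
Qed.

Lemma adj_endo m (psi : cube m -> cube m) : adj_preserving psi ->
  psi (cbot m) = cbot m /\ psi (ctop m) = ctop m.
Proof.
move=> H; have E := adj_topbot H.
have L : ones (psi (ctop m)) <= m by rewrite /ones; apply: leq_trans (max_card _) _; rewrite card_ord.
have B0 : ones (psi (cbot m)) = 0 by lia.
have T : ones (psi (ctop m)) = m by lia.
split; apply/ffunP=> j; rewrite ffunE.
  apply/negP=> pj; move: B0; rewrite /ones => /eqP; rewrite cards_eq0 => /eqP E0.
  by move/setP: E0 => /(_ j); rewrite !inE pj.
have : [set j | psi (ctop m) j] == setT.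
  by rewrite eqEcard subsetT cardsT card_ord /=; rewrite -[X in X <= _]T.
by move/eqP/setP=> /(_ j); rewrite !inE.
Qed.

Lemma coord_ord n (x : cube n) (k : 'I_n) : coord x k = x k.
Proof. by rewrite /coord valK. Qed.

Lemma coord_nat n (x : cube n) (k : nat) (k0 : 'I_n) : k = k0 -> coord x k = x k0.
Proof. by move=> ->; rewrite coord_ord. Qed.

Lemma bump_lt a x y : (bump a x < bump a y) = (x < y).
Proof. by rewrite !ltnNge leq_bump2. Qed.

Lemma face_lift n (i : nat) (hi : i < n.+1) a (y : cube n) (k : 'I_n) :
  face i a y (lift (Ordinal hi) k) = y k.
Proof.
rewrite /face ffunE /= /bump /=.
case: (leqP i k) => ik /=.
  rewrite add1n (_ : (k.+1 < i) = false); last by apply/negbTE; rewrite -leqNgt ltnW.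
  rewrite (_ : (k.+1 == i) = false); last by apply/negbTE; rewrite neq_ltn ltnS ik orbT.
  exact: coord_nat.
by rewrite add0n ik; exact: coord_nat.
Qed.

Lemma face_i n (i : nat) (hi : i < n.+1) a (y : cube n) :
  face i a y (Ordinal hi) = a.
Proof. by rewrite /face ffunE /= ltnn eqxx. Qed.

Lemma face_lift' n (i : 'I_n.+1) a (y : cube n) (k : 'I_n) :
  face i a y (lift i k) = y k.
Proof. by case: i => i hi; rewrite face_lift. Qed.

Lemma face_i' n (i : 'I_n.+1) a (y : cube n) : face i a y i = a.
Proof. by case: i => i hi; rewrite face_i. Qed.

Definition dele n (j : 'I_n.+1) (x : cube n.+1) : cube n := [ffun k => x (lift j k)].

Lemma face_dele n (j : 'I_n.+1) (x : cube n.+1) a : x j = a -> face j a (dele j x) = x.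
Proof.
move=> xj; apply/ffunP=> k.
case: (unliftP j k) => [k' ->|->].
  by rewrite face_lift' ffunE.
by rewrite face_i'.
Qed.

Lemma dele_inj n (j : 'I_n.+1) (x y : cube n.+1) : x j = y j -> dele j x = dele j y -> x = y.
Proof.
move=> xy e; rewrite -(face_dele (erefl (x j))) -(face_dele (erefl (y j))).
by rewrite e xy.
Qed.

Lemma dele_cle n (j : 'I_n.+1) (x y : cube n.+1) : x j = y j ->
  cle (dele j x) (dele j y) = cle x y.
Proof.
move=> xy; rewrite /cle; apply/forallP/forallP=> H k.
  case: (unliftP j k) => [k' ->|->]; last by rewrite xy leqnn.
  by have := H k'; rewrite /dele /= !ffunE.
by rewrite !ffunE; apply: H.
Qed.

Lemma dele_dist n (j : 'I_n.+1) (x y : cube n.+1) : x j = y j ->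
  dist (dele j x) (dele j y) = dist x y.
Proof.
move=> xy; rewrite /dist.
have -> : [set k | x k != y k] = lift j @: [set k | dele j x k != dele j y k].
  apply/setP=> k; rewrite inE.
  case: (unliftP j k) => [k' ->|->].
    by rewrite (mem_imset _ _ (@lift_inj _ j)) inE !ffunE.
  rewrite xy eqxx; apply/esym/negbTE/imsetP=> [[k' _ E]].
  by have := neq_lift j k'; rewrite -E eqxx.
by rewrite card_imset //; exact: lift_inj.
Qed.

Lemma dele_adj m n (f : cube m -> cube n.+1) (j : 'I_n.+1) :
  adj_preserving f -> (forall x y, f x j = f y j) ->
  adj_preserving (fun x => dele j (f x)).
Proof.
case=> Hl Hd Hc; split=> x y.
  move/Hl; rewrite /clt (dele_cle (Hc x y)) => /andP [ne ->]; rewrite andbT.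
  by apply: contra ne => /eqP /(dele_inj (Hc x y)) ->.
by move/Hd; rewrite (dele_dist (Hc x y)).
Qed.

Lemma const_coord m n (f : cube m -> cube n) : adj_preserving f -> m < n ->
  exists j, forall x, f x j = f (cbot m) j.
Proof.
move=> H mn.
case: (pickP (fun j => f (cbot m) j == f (ctop m) j)) => [j /eqP Hj | none].
  exists j => x; have [l1 l2] := adj_between H x.
  move: l1 l2; rewrite /cle => /forallP /(_ j) l1 /forallP /(_ j).
  move: l1; rewrite Hj; by case: (f x j); case: (f (ctop m) j).
exfalso.
have [_ l] := adj_between H (cbot m).
have D := cle_dist l; rewrite (adj_topbot H) in D.
have : dist (f (cbot m)) (f (ctop m)) = n.
  rewrite /dist.
  have -> : [set j | f (cbot m) j != f (ctop m) j] = setT.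
    apply/setP=> j; rewrite !inE; by have := none j => /= ->.
  by rewrite cardsT card_ord.
rewrite D => E; move: mn; rewrite -E; move: (ones _) => a; lia.
Qed.

Lemma exist_fact d : forall m n (f : cube m -> cube n), n = m + d -> adj_preserving f ->
  exists phi : cube m -> cube n, exists psi : cube m -> cube m,
    [/\ in_box phi, adj_preserving psi & f =1 phi \o psi].
Proof.
elim: d => [|d IH] m n f.
  rewrite addn0 => En; subst n => H; exists id, f; split=> //.
  by exists id => //; exact: box_id.
rewrite addnS => En; subst n => H.
have [j Hj] := const_coord H (leq_addr _ _ : m < (m + d).+1).
have Hc : forall x y, f x j = f y j by move=> x y; rewrite !Hj.
have [phi [psi [[g bg eg] apsi e]]] := IH m (m + d) _ erefl (dele_adj H Hc).
exists (fun x => face j (f (cbot m) j) (phi x)), psi; split=> //.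
  exists (face j (f (cbot m) j) \o g); last by move=> x /=; rewrite eg.
  by apply: box_face => //; rewrite -ltnS.
move=> x /=; rewrite -[phi (psi x)]/((phi \o psi) x) -(e x) face_dele //.
Qed.

Definition Box m n (g : cube m -> cube n) := exists h : 'I_m -> 'I_n,
  [/\ (forall i k : 'I_m, i < k -> h i < h k),
      (forall x i, g x (h i) = x i) &
      (forall j, (forall i, h i != j) -> forall x y, g x j = g y j)].

Lemma box_Box m n (g : cube m -> cube n) : box_mor g -> Box g.
Proof.
elim=> {m n g} [m|m n g i a _ [h [Hh Hv Hc]] Hi].
  exists id; split=> // j H; by have := H j; rewrite eqxx.
have hi : i < n.+1 by rewrite ltnS.
exists (fun k => lift (Ordinal hi) (h k)); split.
- by move=> k l kl; rewrite /= bump_lt; apply: Hh.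
- by move=> x k /=; rewrite face_lift Hv.
move=> j Hj x y /=.
case: (unliftP (Ordinal hi) j) Hj => [j' ->|->] Hj; last by rewrite !face_i.
rewrite !face_lift; apply: Hc => k; apply: contra (Hj k) => /eqP ->.
by [].
Qed.

Lemma Box_ext m n (g g' : cube m -> cube n) : g =1 g' -> Box g -> Box g'.
Proof.
move=> e [h [Hh Hv Hc]]; exists h; split=> //.
  by move=> x i; rewrite -e.
by move=> j Hj x y; rewrite -!e; apply: Hc.
Qed.

Lemma in_box_Box m n (g : cube m -> cube n) : in_box g -> Box g.
Proof. by case=> g' /box_Box B e; apply: Box_ext B => x; rewrite e. Qed.

Lemma Box_inj m n (g : cube m -> cube n) : Box g -> injective g.
Proof.
case=> h [_ Hv _] x y e; apply/ffunP=> i.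
by rewrite -(Hv x i) -(Hv y i) e.
Qed.

Lemma Box_img m n (g : cube m -> cube n) h :
  (forall x i, g x (h i) = x i) ->
  (forall j, (forall i, h i != j) -> forall x y, g x j = g y j) ->
  forall j, [exists i, h i == j] = (g (cbot m) j != g (ctop m) j).
Proof.
move=> Hv Hc j; case: existsP => [[i /eqP <-]|N].
  by rewrite !Hv !ffunE.
rewrite (Hc j _ (cbot m) (ctop m)) ?eqxx // => i.
by apply/negP => /eqP e; apply: N; exists i; rewrite e.
Qed.

Lemma Box_uniq m n (g g' : cube m -> cube n) : Box g -> Box g' ->
  g (cbot m) = g' (cbot m) -> g (ctop m) = g' (ctop m) -> g =1 g'.
Proof.
case=> h [Hh Hv Hc] [h' [Hh' Hv' Hc']] Eb Et.
have I : forall j, [exists i, h i == j] = [exists i, h' i == j].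
  by move=> j; rewrite (Box_img Hv Hc) (Box_img Hv' Hc') Eb Et.
have S : sorted (relpre val ltn) (enum 'I_m) by rewrite -sorted_map val_enum_ord iota_ltn_sorted.
have hh : forall i, h i = h' i.
  have : [seq val (h i) | i <- enum 'I_m] = [seq val (h' i) | i <- enum 'I_m].
    apply: (irr_sorted_eq ltn_trans ltnn).
    - by rewrite sorted_map; apply: sub_sorted S => a b /=; apply: Hh.
    - by rewrite sorted_map; apply: sub_sorted S => a b /=; apply: Hh'.
    move=> k; apply/mapP/mapP=> [[i _ ->]|[i _ ->]].
      have : [exists i', h' i' == h i] by rewrite -I; apply/existsP; exists i.
      by case/existsP=> i' /eqP e; exists i'; rewrite ?mem_enum // e.
    have : [exists i', h i' == h' i] by rewrite I; apply/existsP; exists i.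
    by case/existsP=> i' /eqP e; exists i'; rewrite ?mem_enum // e.
  by move/eq_in_map=> e i; apply: val_inj; apply: e; rewrite mem_enum.
move=> x; apply/ffunP=> j.
case: (boolP [exists i, h i == j]) => [/existsP [i /eqP <-] | N].
  by rewrite Hv hh Hv'.
rewrite (Hc j _ x (cbot m)); last by move=> i; apply: contra N => e; apply/existsP; exists i.
rewrite Eb (Hc' j _ (cbot m) x) // => i.
by rewrite I in N; apply: contra N => e; apply/existsP; exists i.
Qed.


Lemma part1 (m n : nat) : (m <= n)%N -> forall f : cube m -> cube n,
     adj_preserving f ->
     exists phi : cube m -> cube n, exists psi : cube m -> cube m,
       [/\ in_box phi, adj_preserving psi, f =1 phi \o psi &
         forall (phi' : cube m -> cube n) (psi' : cube m -> cube m),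
           in_box phi' -> adj_preserving psi' -> f =1 phi' \o psi' ->
           phi' =1 phi /\ psi' =1 psi].
Proof.
move=> mn f H.
have [phi [psi [bp ap e]]] := exist_fact (esym (subnKC mn)) H.
exists phi, psi; split=> // phi' psi' bp' ap' e'.
have [b1 t1] := adj_endo ap; have [b2 t2] := adj_endo ap'.
have E : phi' =1 phi.
  apply: Box_uniq; try exact: in_box_Box.
    by move: (e (cbot m)) (e' (cbot m)) => /=; rewrite b1 b2 => -> ->.
  by move: (e (ctop m)) (e' (ctop m)) => /=; rewrite t1 t2 => -> ->.
split=> // x; apply: (Box_inj (in_box_Box bp)).
by rewrite -E -[phi' _]/((phi' \o psi') x) -e' e.
Qed.

Theorem proposition7p14 :
  (forall (m n : nat), (m <= n)%N -> forall f : cube m -> cube n,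
     adj_preserving f ->
     exists phi : cube m -> cube n, exists psi : cube m -> cube m,
       [/\ in_box phi, adj_preserving psi, f =1 phi \o psi &
         forall (phi' : cube m -> cube n) (psi' : cube m -> cube m),
           in_box phi' -> adj_preserving psi' -> f =1 phi' \o psi' ->
           phi' =1 phi /\ psi' =1 psi]) /\
  (forall (m n : nat), (m <= n)%N -> forall f : cube m -> cube n,
     adj_preserving f -> injective f ->
     exists phi : cube m -> cube n, exists psi : cube m -> cube m,
       [/\ in_box phi, adj_preserving psi /\ injective psi, f =1 phi \o psi &
         forall (phi' : cube m -> cube n) (psi' : cube m -> cube m),
           in_box phi' -> adj_preserving psi' -> injective psi' ->
           f =1 phi' \o psi' ->
           phi' =1 phi /\ psi' =1 psi]).
Proof.
split; first exact: part1.
move=> m n mn f H inj.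
have [phi [psi [bp ap e U]]] := part1 mn H.
exists phi, psi; split=> //.
  split=> // x y exy; apply: inj; by rewrite !e /= exy.
by move=> phi' psi' bp' ap' _ e'; apply: U.
Qed.
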